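(* Let $N\ge 2$ be an integer and $a\in\mathbb{C}$ a constant. Let $\zeta_1(\tau),\dots,\zeta_N(\tau)$ be (complex-valued) solutions, on a domain of the independent variable $\tau$ on which $\zeta_n(\tau)\neq\zeta_m(\tau)$ for all $n\neq m$, of the system $$\zeta_n''=2\sum_{m=1,\,m\neq n}^{N} a\,\frac{\zeta_n'\,\zeta_m'}{\zeta_n-\zeta_m},\qquad n=1,\dots,N,$$ where primes denote differentiation with respect to $\tau$. Define the monic polynomial $$\Pi(\zeta,\tau)=\prod_{n=1}^{N}\bigl(\zeta-\zeta_n(\tau)\bigr)=\zeta^N+\sum_{m=1}^{N}\gamma_m(\tau)\,\zeta^{N-m}.$$ Then $\Pi$ satisfies the nonlinear PDE $$\Pi_{\tau\tau}\,(\Pi_\zeta)^2+(1-a)\Bigl\{\Pi_{\zeta\zeta}\,(\Pi_\tau)^2-\Pi_\zeta\,\bigl[(\Pi_\tau)^2\bigr]_\zeta\Bigr\}=\Psi\,\Pi,$$ where $\Psi(\zeta,\tau)$ is a polynomial in $\zeta$ of degree (at most) $2N-4$, with coefficients depending on $\tau$.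
   Context: Subscripts on $\Pi$ denote partial derivatives, e.g. $\Pi_\zeta=\partial\Pi/\partial\zeta$, $\Pi_{\tau\tau}=\partial^2\Pi/\partial\tau^2$. The coefficients $\gamma_m(\tau)$ are the coefficients of $\Pi$ as a polynomial in $\zeta$ (so they are the elementary symmetric functions of the $\zeta_n$ up to sign). *)

(* Defs.v *)
From HB Require Import structures.
From mathcomp Require Import all_boot all_order all_algebra.
From mathcomp Require Import all_classical all_reals all_analysis.
From mathcomp Require Import complex.
Set Implicit Arguments. Unset Strict Implicit. Unset Printing Implicit Defensive.
Import Order.TTheory GRing.Theory Num.Theory.
Import numFieldNormedType.Exports.
Local Open Scope ring_scope.
Local Open Scope complex_scope.

Section PiDefs.
Variables (R : realType) (N : nat) (z : 'I_N -> R[i] -> R[i]).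

Definition Pi (x t : R[i]) : R[i] := \prod_(n < N) (x - z n t).

Definition Pi_t (x t : R[i]) : R[i] := derive1 (fun s => Pi x s : R[i]^o) t.
Definition Pi_tt (x t : R[i]) : R[i] := derive1 (fun s => Pi_t x s : R[i]^o) t.
Definition Pi_x (x t : R[i]) : R[i] := derive1 (fun y => Pi y t : R[i]^o) x.
Definition Pi_xx (x t : R[i]) : R[i] := derive1 (fun y => Pi_x y t : R[i]^o) x.
Definition Pi_t_sq_x (x t : R[i]) : R[i] := derive1 (fun y => Pi_t y t ^+ 2 : R[i]^o) x.
End PiDefs.

(* Main.v *)
Require Import Defs.
From HB Require Import structures.
From mathcomp Require Import all_boot all_order all_algebra.
From mathcomp Require Import all_classical all_reals all_analysis.
From mathcomp Require Import complex.
From mathcomp Require Import ring zify.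
Import Order.TTheory GRing.Theory Num.Theory.
Import numFieldNormedType.Exports.
Local Open Scope ring_scope.
Section Gen.
Variable K : numFieldType.

Lemma is_derive_mul (f g : K -> K) (t : K) (df dg : K) :
  is_derive t 1 f df -> is_derive t 1 g dg ->
  is_derive t 1 (fun s => f s * g s) (f t * dg + g t * df).
Proof. move=> H1 H2. have := is_deriveM H1 H2. by []. Qed.

Lemma is_derive_add (f g : K -> K) (t : K) (df dg : K) :
  is_derive t 1 f df -> is_derive t 1 g dg ->
  is_derive t 1 (fun s => f s + g s) (df + dg).
Proof. move=> H1 H2. have := is_deriveD H1 H2. by []. Qed.

Lemma is_derive_bigsum (I : Type) (r : seq I) (P : pred I) (F : I -> K -> K)
   (dF : I -> K) (t : K) :
 (forall i, P i -> is_derive t 1 (F i) (dF i)) ->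
 is_derive t 1 (fun s => \sum_(i <- r | P i) F i s) (\sum_(i <- r | P i) dF i).
Proof.
move=> H; elim: r => [|x r IH].
  rewrite big_nil.
  have -> : (fun s => \sum_(i <- [::] | P i) F i s) = cst 0.
    by apply/funext => s; rewrite big_nil.
  exact: is_derive_cst.
rewrite big_cons; case Px: (P x).
  have -> : (fun s => \sum_(i <- x :: r | P i) F i s) =
            (fun s => F x s + \sum_(i <- r | P i) F i s).
    by apply/funext => s; rewrite big_cons Px.
  exact: is_derive_add (H x Px) IH.
have -> : (fun s => \sum_(i <- x :: r | P i) F i s) =
          (fun s => \sum_(i <- r | P i) F i s).
  by apply/funext => s; rewrite big_cons Px.
exact: IH.
Qed.

Lemma is_derive_bigprod (I : eqType) (r : seq I) (P : pred I) (F : I -> K -> K)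
   (dF : I -> K) (t : K) :
 uniq r -> (forall i, P i -> is_derive t 1 (F i) (dF i)) ->
 is_derive t 1 (fun s => \prod_(i <- r | P i) F i s)
   (\sum_(i <- r | P i) dF i * \prod_(j <- r | P j && (j != i)) F j t).
Proof.
move=> + H; elim: r => [|x r IH].
  move=> _; rewrite big_nil.
  have -> : (fun s => \prod_(i <- [::] | P i) F i s) = cst 1.
    by apply/funext => s; rewrite big_nil.
  exact: is_derive_cst.
move=> /= /andP[xr ur]; have {}IH := IH ur.
have E1 : \sum_(i <- r | P i) dF i * \prod_(j <- x :: r | P j && (j != i)) F j t
   = \sum_(i <- r | P i) dF i * ((if P x then F x t else 1) * \prod_(j <- r | P j && (j != i)) F j t).
  rewrite big_seq_cond [RHS]big_seq_cond; apply: eq_bigr => i /andP[ir Pi].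
  rewrite big_cons; have -> : (x != i) by apply: contraNneq xr => ->.
  by case: (P x); rewrite ?mul1r.
have E2 : \prod_(j <- r | P j && (j != x)) F j t = \prod_(j <- r | P j) F j t.
  rewrite big_seq_cond [RHS]big_seq_cond; apply: eq_bigl => j.
  case jr: (j \in r) => //=; have -> : (j != x) by apply: contraNneq xr => <-.
  by rewrite andbT.
rewrite big_cons; case Px: (P x).
  have -> : (fun s => \prod_(i <- x :: r | P i) F i s) =
            (fun s => F x s * \prod_(i <- r | P i) F i s).
    by apply/funext => s; rewrite big_cons Px.
  apply: is_derive_eq; first exact: is_derive_mul (H x Px) IH.
  rewrite E1 big_cons eqxx andbF E2 addrC; congr (_ + _); first exact: mulrC.
  rewrite mulr_sumr; apply: eq_bigr => i _; rewrite Px; ring.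
have -> : (fun s : K => \prod_(i <- x :: r | P i) F i s) =
          (fun s : K => \prod_(i <- r | P i) F i s).
  by apply/funext => s; rewrite big_cons Px.
apply: (is_derive_eq IH).
by rewrite E1; apply: eq_bigr => i _; rewrite Px mul1r.
Qed.
End Gen.

Section Alg.
Context {K : numFieldType} {N : nat}.
Variables (a : K) (w v u : 'I_N -> K).

Definition Ef (n : 'I_N) (y : K) := \prod_(m < N | m != n) (y - w m).
Definition Ff (n m : 'I_N) (y : K) := \prod_(l < N | (l != n) && (l != m)) (y - w l).
Definition EP (n : 'I_N) : {poly K} := \prod_(m < N | m != n) ('X - (w m)%:P).
Definition FP (n m : 'I_N) : {poly K} :=
  \prod_(l < N | (l != n) && (l != m)) ('X - (w l)%:P).
Definition PP : {poly K} := \prod_(n < N) ('X - (w n)%:P).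
Definition D1 : {poly K} := \sum_(n < N) EP n.
Definition D2 : {poly K} := \sum_(n < N) \sum_(m < N | m != n) FP n m.
Definition Q1 : {poly K} := \sum_(n < N) (- v n) *: EP n.
Definition Q1x : {poly K} := \sum_(n < N) (- v n) *: \sum_(m < N | m != n) FP n m.
Definition Q2a : {poly K} := \sum_(n < N) (- u n) *: EP n.
Definition Q2b : {poly K} :=
  \sum_(n < N) (- v n) *: \sum_(m < N | m != n) (- v m) *: FP n m.
Definition Q2 : {poly K} := Q2a + Q2b.
Definition LP : {poly K} :=
  Q2 * D1 ^+ 2 + (1 - a) *: (D2 * Q1 ^+ 2 - D1 * (2%:R *: (Q1 * Q1x))).

Lemma hEP n y : (EP n).[y] = Ef n y.
Proof. by rewrite horner_prod; apply: eq_bigr => i _; rewrite hornerXsubC. Qed.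
Lemma hFP n m y : (FP n m).[y] = Ff n m y.
Proof. by rewrite horner_prod; apply: eq_bigr => i _; rewrite hornerXsubC. Qed.
Lemma hPP y : PP.[y] = \prod_(n < N) (y - w n).
Proof. by rewrite horner_prod; apply: eq_bigr => i _; rewrite hornerXsubC. Qed.
Lemma hD1 y : D1.[y] = \sum_(n < N) Ef n y.
Proof. by rewrite horner_sum; apply: eq_bigr => i _; rewrite hEP. Qed.
Lemma hD2 y : D2.[y] = \sum_(n < N) \sum_(m < N | m != n) Ff n m y.
Proof.
rewrite horner_sum; apply: eq_bigr => i _; rewrite horner_sum.
by apply: eq_bigr => j _; rewrite hFP.
Qed.
Lemma hQ1 y : Q1.[y] = \sum_(n < N) (- v n) * Ef n y.
Proof. by rewrite horner_sum; apply: eq_bigr => i _; rewrite hornerZ hEP. Qed.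
Lemma hQ1x y : Q1x.[y] = \sum_(n < N) (- v n) * \sum_(m < N | m != n) Ff n m y.
Proof.
rewrite horner_sum; apply: eq_bigr => i _; rewrite hornerZ horner_sum.
by congr (_ * _); apply: eq_bigr => j _; rewrite hFP.
Qed.
Lemma hQ2 y : Q2.[y] = \sum_(n < N) ((- u n) * Ef n y
    + (- v n) * \sum_(m < N | m != n) (- v m) * Ff n m y).
Proof.
rewrite hornerD !horner_sum -big_split; apply: eq_bigr => i _ /=.
rewrite !hornerZ hEP horner_sum; congr (_ + _ * _).
by apply: eq_bigr => j _; rewrite hornerZ hFP.
Qed.

Lemma hLP y : LP.[y] = Q2.[y] * D1.[y] ^+ 2 +
   (1 - a) * (D2.[y] * Q1.[y] ^+ 2 - D1.[y] * (2 * (Q1.[y] * Q1x.[y]))).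
Proof. by rewrite /LP !(hornerD, hornerM, hornerZ, hornerN, horner_exp). Qed.

Lemma Ef_root n k : n != k -> Ef n (w k) = 0.
Proof.
move=> nk; rewrite /Ef (bigD1 k) /=; last by rewrite eq_sym.
by rewrite subrr mul0r.
Qed.
Lemma Ff_root n m k : n != k -> m != k -> Ff n m (w k) = 0.
Proof.
move=> nk mk; rewrite /Ff (bigD1 k) /=; last by rewrite ![k == _]eq_sym (negPf nk) (negPf mk).
by rewrite subrr mul0r.
Qed.
Lemma EfF k m : m != k -> Ef k (w k) = (w k - w m) * Ff k m (w k).
Proof. by move=> mk; rewrite /Ef (bigD1 m). Qed.
Lemma Ffsym n m y : Ff n m y = Ff m n y.
Proof. by apply: eq_bigl => l; rewrite andbC. Qed.

Lemma collapse2 k (g : 'I_N -> 'I_N -> K) :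
  (forall n m, n != k -> m != k -> g n m = 0) ->
  \sum_(n < N) \sum_(m < N | m != n) g n m =
  \sum_(m < N | m != k) g k m + \sum_(n < N | n != k) g n k.
Proof.
move=> H; rewrite (bigD1 k) //=; congr (_ + _).
apply: eq_bigr => n nk; rewrite (bigD1 k) /=; last by rewrite eq_sym.
by rewrite big1 ?addr0 // => m /andP[mn mk]; apply: H.
Qed.
Lemma collapse1 k (g : 'I_N -> K) :
  (forall n, n != k -> g n = 0) -> \sum_(n < N) g n = g k.
Proof. by move=> H; rewrite (bigD1 k) //= big1 ?addr0. Qed.

Hypothesis injw : forall n m, n != m -> w n != w m.
Hypothesis hu : forall n, u n =
   2 * \sum_(m < N | m != n) a * (v n * v m) / (w n - w m).

Lemma LP_root k : LP.[w k] = 0.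
Proof.
set p := Ef k (w k).
set S := \sum_(m < N | m != k) Ff k m (w k).
set T := \sum_(m < N | m != k) v m * Ff k m (w k).
have eD1 : D1.[w k] = p.
  by rewrite hD1 (@collapse1 k (fun n => Ef n (w k))) // => n; apply: Ef_root.
have eD2 : D2.[w k] = S + S.
  rewrite hD2 (@collapse2 k (fun n m => Ff n m (w k))); last by move=> n m; apply: Ff_root.
  by congr (_ + _); apply: eq_bigr => n _; rewrite Ffsym.
have eQ1 : Q1.[w k] = - v k * p.
  rewrite hQ1 (@collapse1 k (fun n => - v n * Ef n (w k))) // => n nk.
  by rewrite Ef_root ?mulr0.
have eQ1x : Q1x.[w k] = - v k * S - T.
  rewrite hQ1x.
  under eq_bigr => n _ do rewrite mulr_sumr.
  rewrite (@collapse2 k (fun n m => - v n * Ff n m (w k))); last first.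
    by move=> n m nk mk; rewrite Ff_root ?mulr0.
  rewrite /S /T mulr_sumr -sumrN; congr (_ + _); apply: eq_bigr => n _.
  by rewrite Ffsym mulNr.
have eQ2 : Q2.[w k] = - (u k * p) + (v k * T + v k * T).
  rewrite hQ2 big_split /=; congr (_ + _).
    rewrite (@collapse1 k (fun n => - u n * Ef n (w k))) ?mulNr // => n nk.
    by rewrite Ef_root ?mulr0.
  under eq_bigr => n _ do rewrite mulr_sumr.
  rewrite (@collapse2 k (fun n m => - v n * (- v m * Ff n m (w k)))); last first.
    by move=> n m nk mk; rewrite Ff_root ?mulr0.
  rewrite /T !mulr_sumr; congr (_ + _); apply: eq_bigr => n _.
    ring.
  rewrite Ffsym; ring.
have eup : u k * p = 2 * a * v k * T.
  rewrite hu /T -mulrA mulr_suml !mulr_sumr; apply: eq_bigr => m mk.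
  have hne : w k - w m != 0 by rewrite subr_eq0; apply: injw; rewrite eq_sym.
  rewrite /p (@EfF k m mk) [X in 2 * X]mulrA divfK //; ring.
rewrite hLP eD1 eD2 eQ1 eQ1x eQ2 eup; ring.
Qed.


Lemma count_card (T : finType) (P : pred T) : count P (index_enum T) = #|P|.
Proof. by rewrite -size_filter deprecated_filter_index_enum -cardE. Qed.

Lemma size_prodP (P : pred 'I_N) :
  size (\prod_(i < N | P i) ('X - (w i)%:P)) = #|P|.+1.
Proof. by rewrite -big_filter size_prod_XsubC size_filter count_card. Qed.

Lemma size_EP n : size (EP n) = N.
Proof.
rewrite /EP size_prodP.
have -> : #|(fun m : 'I_N => m != n)| = N.-1.
  have h : #|predC1 n| = N.-1 by rewrite cardC1 card_ord.
  by rewrite -h; apply: eq_card.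
by case: N n => [[]|].
Qed.

Lemma size_FP n m : m != n -> (size (FP n m) <= N.-1)%N.
Proof.
move=> mn; rewrite /FP size_prodP.
have h1 : #|predC1 n| = N.-1 by rewrite cardC1 card_ord.
rewrite (cardD1 m) inE /= mn /= in h1.
have -> : #|(fun l : 'I_N => (l != n) && (l != m))| = #|[predD1 predC1 n & m]|.
  by apply: eq_card => l; rewrite !inE andbC.
by rewrite -h1 add1n.
Qed.

Lemma size_sum_le (I : finType) (P : pred I) (F : I -> {poly K}) c :
  (forall i, P i -> (size (F i) <= c)%N) -> (size (\sum_(i | P i) F i)%R <= c)%N.
Proof. by move=> H; apply: leq_trans (size_sum _ _ _) _; apply/bigmax_leqP. Qed.

Lemma sizeM_le {p q : {poly K}} {b c} :
  (size p <= b)%N -> (size q <= c)%N -> (size (p * q)%R <= (b + c).-1)%N.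
Proof. move=> hp hq; apply: leq_trans (size_mul_leq _ _) _; lia. Qed.

Lemma sizeD_le (p q : {poly K}) c :
  (size p <= c)%N -> (size q <= c)%N -> (size (p + q)%R <= c)%N.
Proof. by move=> hp hq; apply: leq_trans (size_polyD _ _) _; rewrite geq_max hp hq. Qed.

Lemma sizeB_le (p q : {poly K}) c :
  (size p <= c)%N -> (size q <= c)%N -> (size (p - q)%R <= c)%N.
Proof. by move=> hp hq; apply: sizeD_le => //; rewrite size_polyN. Qed.

Lemma sizeZ_le {b : K} {p : {poly K}} {c} : (size p <= c)%N -> (size (b *: p)%R <= c)%N.
Proof. by move=> hp; apply: leq_trans (size_scale_leq _ _) _. Qed.

Lemma sum_antisym (g : 'I_N -> 'I_N -> K) : (forall n m, g m n = - g n m) ->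
  \sum_(n < N) \sum_(m < N | m != n) g n m = 0.
Proof.
move=> H; set S := (X in X = 0).
have E : S = \sum_(n < N) \sum_(m < N) (if m != n then g n m else 0).
  by apply: eq_bigr => n _; rewrite big_mkcond.
have E2 : S = - S.
  rewrite {1}E exchange_big /= E -sumrN; apply: eq_bigr => n _.
  rewrite -sumrN; apply: eq_bigr => m _; rewrite eq_sym.
  by case: (m != n); rewrite ?oppr0 // H.
have : S + S = 0 by rewrite {1}E2 addNr.
by rewrite -mulr2n -mulr_natr => /eqP; rewrite mulf_eq0 pnatr_eq0 orbF => /eqP.
Qed.

Lemma sum_u : \sum_(n < N) u n = 0.
Proof.
under eq_bigr => n _ do rewrite hu mulr_sumr.
apply: sum_antisym => n m; rewrite -opprB invrN !mulrN [v m * _]mulrC.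
by rewrite -mulrN; congr (_ * _); rewrite mulrN.
Qed.

Lemma size_Q2a : (2 <= N)%N -> (size Q2a <= N.-1)%N.
Proof.
move=> N2; apply/leq_sizeP => j hj; rewrite /Q2a coef_sum.
have [jN|jN] := leqP N j.
  by apply: big1 => n _; rewrite coefZ nth_default ?mulr0 // size_EP.
have -> : j = N.-1 by lia.
have lc n : (EP n)`_(N.-1) = 1.
  have /monicP := monic_prod_XsubC (index_enum 'I_N) (fun m => m != n) w.
  by rewrite /lead_coef -/(EP n) size_EP.
under eq_bigr => n _ do rewrite coefZ lc mulr1.
by rewrite sumrN sum_u oppr0.
Qed.

Lemma size_LP : (2 <= N)%N -> (size LP <= 3 * N - 3)%N.
Proof.
move=> N2.
have sD1 : (size D1 <= N)%N by apply: size_sum_le => n _; rewrite size_EP.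
have sD2 : (size D2 <= N.-1)%N.
  by apply: size_sum_le => n _; apply: size_sum_le => m mn; apply: size_FP.
have sQ1 : (size Q1 <= N)%N.
  by apply: size_sum_le => n _; apply: sizeZ_le; rewrite size_EP.
have sQ1x : (size Q1x <= N.-1)%N.
  apply: size_sum_le => n _; apply: sizeZ_le.
  by apply: size_sum_le => m mn; apply: size_FP.
have sQ2 : (size Q2 <= N.-1)%N.
  apply: sizeD_le; first exact: size_Q2a.
  apply: size_sum_le => n _; apply: sizeZ_le.
  by apply: size_sum_le => m mn; apply: sizeZ_le; apply: size_FP.
apply: sizeD_le.
  rewrite expr2; apply: (leq_trans (sizeM_le sQ2 (sizeM_le sD1 sD1))); lia.
apply: sizeZ_le; apply: sizeB_le.
  rewrite expr2; apply: (leq_trans (sizeM_le sD2 (sizeM_le sQ1 sQ1))); lia.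
apply: (leq_trans (sizeM_le sD1 (sizeZ_le (sizeM_le sQ1 sQ1x)))); lia.
Qed.

End Alg.

Section GenExtra.
Variable K : numFieldType.

Lemma derive1_val (f : K -> K) (x df : K) : is_derive x 1 f df -> derive1 f x = df.
Proof. by move=> H; rewrite derive1E derive_val. Qed.

Lemma is_derive_XsubC (c : K) (y : K) : is_derive y 1 (fun s : K => s - c) 1.
Proof.
have := is_deriveB (f := id) (g := cst c) (x := y) (v := 1) (df := 1) (dg := 0).
by rewrite subr0; apply.
Qed.

Lemma is_derive_CsubF (c : K) (f : K -> K) (t df : K) :
  is_derive t 1 f df -> is_derive t 1 (fun s => c - f s) (- df).
Proof.
move=> H; have := is_deriveB (f := cst c) (g := f) (x := t) (v := 1) (df := 0) (dg := df).
by rewrite sub0r; apply.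
Qed.

Lemma is_derive_neg (f : K -> K) (t df : K) :
  is_derive t 1 f df -> is_derive t 1 (fun s => - f s) (- df).
Proof. by move=> H; have := is_deriveN H. Qed.

Lemma is_derive_cmul (c : K) (f : K -> K) (t df : K) :
  is_derive t 1 f df -> is_derive t 1 (fun s => c * f s) (c * df).
Proof.
move=> H; have := @is_derive_mul K (fun _ => c) f t 0 df (is_derive_cst c t 1) H.
by rewrite mulr0 addr0.
Qed.
End GenExtra.

Section Main.
Variables (R : realType) (N : nat) (a : R[i]) (D : set R[i]^o)
  (z : 'I_N -> R[i]^o -> R[i]^o).
Hypothesis hD : open D.
Hypothesis hz1 : forall (n : 'I_N) (t : R[i]^o), D t -> derivable (z n) t 1.
Hypothesis hz2 : forall (n : 'I_N) (t : R[i]^o), D t -> derivable (derive1 (z n)) t 1.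

Definition wt (t : R[i]) (n : 'I_N) : R[i] := z n t.
Definition vt (t : R[i]) (n : 'I_N) : R[i] := derive1 (z n) t.
Definition ut (t : R[i]) (n : 'I_N) : R[i] := derive1 (derive1 (z n)) t.

Lemma isz n t : D t -> is_derive t 1 (z n) (vt t n).
Proof. by move=> Dt; rewrite /vt derive1E; apply: derivableP; apply: hz1. Qed.
Lemma isz2 n t : D t -> is_derive t 1 (derive1 (z n)) (ut t n).
Proof. by move=> Dt; rewrite /ut derive1E; apply: derivableP; apply: hz2. Qed.

Lemma Pi_x_eq t y : Pi_x z y t = \sum_(n < N) Ef (wt t) n y.
Proof.
rewrite /Pi_x /Pi; apply: derive1_val.
have H : is_derive (y : R[i]^o) 1 (fun s : R[i]^o => \prod_(n < N) (s - z n t) : R[i]^o)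
   (\sum_(n < N) 1 * \prod_(m < N | m != n) (y - z m t)) := @is_derive_bigprod _ _ (index_enum 'I_N) xpredT
  (fun n (s : R[i]) => s - z n t) (fun _ => 1) y (index_enum_uniq _)
  (fun n _ => is_derive_XsubC _ _ y).
apply: (is_derive_eq H).
by apply: eq_bigr => n _; rewrite mul1r.
Qed.

Lemma Pi_t_eq t y : D t -> Pi_t z y t = \sum_(n < N) (- vt t n) * Ef (wt t) n y.
Proof.
move=> Dt; rewrite /Pi_t /Pi; apply: derive1_val.
have H : is_derive (t : R[i]^o) 1 (fun s : R[i]^o => \prod_(n < N) (y - z n s) : R[i]^o)
   (\sum_(n < N) (- vt t n) * \prod_(m < N | m != n) (y - z m t)) :=
  @is_derive_bigprod _ _ (index_enum 'I_N) xpredT (fun n s => y - z n s)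
    (fun n => - vt t n) t (index_enum_uniq _)
    (fun n _ => @is_derive_CsubF _ y _ _ _ (isz n t Dt)).
by apply: (is_derive_eq H).
Qed.

Lemma Pi_xx_eq t y : Pi_xx z y t =
  \sum_(n < N) \sum_(m < N | m != n) Ff (wt t) n m y.
Proof.
rewrite /Pi_xx.
have -> : (fun y0 : R[i] => Pi_x z y0 t) = (fun y0 => \sum_(n < N) Ef (wt t) n y0).
  by apply/funext => y0; rewrite Pi_x_eq.
apply: derive1_val.
have H : is_derive (y : R[i]^o) 1
   (fun s : R[i]^o => \sum_(n < N) Ef (wt t) n s : R[i]^o)
   (\sum_(n < N) \sum_(m < N | m != n) 1 * Ff (wt t) n m y) :=
 @is_derive_bigsum _ _ (index_enum 'I_N) xpredT (fun n s => Ef (wt t) n s)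
   (fun n => \sum_(m < N | m != n) 1 * Ff (wt t) n m y) y
   (fun n _ => @is_derive_bigprod _ _ (index_enum 'I_N) (fun m => m != n)
      (fun m s => s - wt t m) (fun _ => 1) y (index_enum_uniq _)
      (fun m _ => is_derive_XsubC _ _ y)).
apply: (is_derive_eq H); apply: eq_bigr => n _; apply: eq_bigr => m _.
exact: mul1r.
Qed.

Lemma Pi_t_sq_x_eq t y : D t -> Pi_t_sq_x z y t =
  2 * ((Q1 (wt t) (vt t)).[y] * (Q1x (wt t) (vt t)).[y]).
Proof.
move=> Dt; rewrite /Pi_t_sq_x.
have -> : (fun y0 : R[i] => Pi_t z y0 t ^+ 2) =
    (fun y0 => (Q1 (wt t) (vt t)).[y0] * (Q1 (wt t) (vt t)).[y0]).
  by apply/funext => y0; rewrite Pi_t_eq // hQ1 expr2.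
apply: derive1_val.
have HQ : is_derive (y : R[i]^o) 1
    (fun s : R[i]^o => (Q1 (wt t) (vt t)).[s] : R[i]^o) (Q1x (wt t) (vt t)).[y].
  have H : is_derive (y : R[i]^o) 1
     (fun s : R[i]^o => \sum_(n < N) (- vt t n) * Ef (wt t) n s : R[i]^o)
     (\sum_(n < N) (- vt t n) * \sum_(m < N | m != n) 1 * Ff (wt t) n m y) :=
   @is_derive_bigsum _ _ (index_enum 'I_N) xpredT
     (fun n s => (- vt t n) * Ef (wt t) n s)
     (fun n => (- vt t n) * \sum_(m < N | m != n) 1 * Ff (wt t) n m y) y
     (fun n _ => @is_derive_cmul _ (- vt t n) _ _ _
        (@is_derive_bigprod _ _ (index_enum 'I_N) (fun m => m != n)
          (fun m s => s - wt t m) (fun _ => 1) y (index_enum_uniq _)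
          (fun m _ => is_derive_XsubC _ _ y))).
  have -> : (fun s : R[i]^o => (Q1 (wt t) (vt t)).[s] : R[i]^o) =
      (fun s => \sum_(n < N) (- vt t n) * Ef (wt t) n s).
    by apply/funext => s; rewrite hQ1.
  apply: (is_derive_eq H); rewrite hQ1x; apply: eq_bigr => n _.
  by congr (_ * _); apply: eq_bigr => m _; rewrite mul1r.
have H := @is_derive_mul _ _ _ _ _ _ HQ HQ.
apply: (is_derive_eq H); ring.
Qed.

Lemma Pi_tt_eq t x : D t -> Pi_tt z x t = (Q2 (wt t) (vt t) (ut t)).[x].
Proof.
move=> Dt; rewrite /Pi_tt hQ2 derive1E.
have Dn : \forall s \near t, D s := open_nbhs_nbhs (conj hD Dt).
rewrite (@near_eq_derive _ _ _ _ (fun s : R[i]^o =>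
   \sum_(n < N) (- derive1 (z n) s) * \prod_(m < N | m != n) (x - z m s) : R[i]^o));
  last by apply: filterS Dn => s Ds; rewrite Pi_t_eq.
rewrite -derive1E; apply: derive1_val.
have H : is_derive (t : R[i]^o) 1 (fun s : R[i]^o =>
   \sum_(n < N) (- derive1 (z n) s) * \prod_(m < N | m != n) (x - z m s) : R[i]^o)
   (\sum_(n < N) ((- vt t n) * \sum_(m < N | m != n) (- vt t m) *
        \prod_(j < N | (j != n) && (j != m)) (x - z j t)
      + \prod_(m < N | m != n) (x - z m t) * (- ut t n))) :=
 @is_derive_bigsum _ _ (index_enum 'I_N) xpredT _ _ t
   (fun n _ => @is_derive_mul _ (fun s => - derive1 (z n) s)
      (fun s => \prod_(m < N | m != n) (x - z m s)) t _ _
      (@is_derive_neg _ _ _ _ (isz2 n t Dt))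
      (@is_derive_bigprod _ _ (index_enum 'I_N) (fun m => m != n)
         (fun m s => x - z m s) (fun m => - vt t m) t (index_enum_uniq _)
         (fun m _ => @is_derive_CsubF _ x _ _ _ (isz m t Dt)))).
apply: (is_derive_eq H); apply: eq_bigr => n _.
by rewrite addrC [_ * (- ut t n)]mulrC.
Qed.

End Main.
Arguments wt {R N} z t n.
Arguments vt {R N} z t n.
Arguments ut {R N} z t n.

Theorem lemmaD1 (R : realType) (N : nat) (a : R[i]) (D : set R[i]^o)
    (z : 'I_N -> R[i]^o -> R[i]^o) :
  (2 <= N)%N ->
  open D ->
  (forall (n m : 'I_N) (t : R[i]^o), D t -> n != m -> z n t != z m t) ->
  (forall (n : 'I_N) (t : R[i]^o), D t -> derivable (z n) t 1) ->
  (forall (n : 'I_N) (t : R[i]^o), D t -> derivable (derive1 (z n)) t 1) ->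
  (forall (n : 'I_N) (t : R[i]^o), D t ->
     derive1 (derive1 (z n)) t =
     2 * \sum_(m < N | m != n)
           a * (derive1 (z n) t * derive1 (z m) t) / (z n t - z m t)) ->
  exists Psi : R[i] -> {poly R[i]},
    (forall t, D t -> (size (Psi t) <= (2 * N - 3))%N) /\
    (forall t, D t -> forall x : R[i],
       Pi_tt z x t * Pi_x z x t ^+ 2
       + (1 - a) * (Pi_xx z x t * Pi_t z x t ^+ 2 - Pi_x z x t * Pi_t_sq_x z x t)
       = (Psi t).[x] * Pi z x t).
Proof.
move=> N2 hD hdist hz1 hz2 hode.
exists (fun t => LP a (wt z t) (vt z t) (ut z t) %/ PP (wt z t)).
have sPP t : size (PP (wt z t)) = N.+1.
  by rewrite /PP size_prod_XsubC -count_predT count_card card_ord.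
split.
  move=> t Dt; rewrite size_divp; last by rewrite -size_poly_eq0 sPP.
  rewrite sPP /=.
  have hs := @size_LP _ _ a (wt z t) (vt z t) (ut z t) (fun n => hode n t Dt) N2.
  apply: (leq_trans (leq_sub2r N hs)); lia.
move=> t Dt x.
rewrite (@Pi_tt_eq _ _ _ _ hD hz1 hz2 t x Dt) !Pi_x_eq Pi_xx_eq (@Pi_t_eq _ _ _ _ hz1 t x Dt).
rewrite (@Pi_t_sq_x_eq _ _ _ _ hz1 t x Dt) -hD1 -hD2 -hQ1 -hLP.
have injw : forall n m, n != m -> wt z t n != wt z t m.
  by move=> n m nm; apply: hdist.
have dvd : PP (wt z t) %| LP a (wt z t) (vt z t) (ut z t).
  have := uniq_roots_dvdp (p := LP a (wt z t) (vt z t) (ut z t))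
     (rs := map (wt z t) (index_enum 'I_N)).
  rewrite big_map; apply.
    apply/allP => y /mapP[k _ ->]; rewrite /root; apply/eqP.
    exact: (@LP_root _ _ a _ _ _ injw (fun n => hode n t Dt) k).
  rewrite uniq_rootsE map_inj_uniq ?index_enum_uniq // => n m e.
  case: (eqVneq n m) => // nm.
  by move: (injw n m nm); rewrite e eqxx.
by rewrite -{1}(divpK dvd) hornerM hPP.
Qed.
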